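(* For every $n$ there is an OBDD $D_n$ on $O(n)$ variables of weak width at most $3$ and a subset $Z$ of its variables such that the function $\neg\exists Z\,D_n$ has no OBDD of size $2^{o(n)}$.
   Context: A binary decision diagram (BDD) is a directed acyclic graph with one source and two sinks labeled $0$ and $1$; every non-sink node is labeled by a Boolean variable and has two outgoing edges labeled $0$ and $1$. On an assignment one follows, from the source, at each node labeled $X$ the edge labeled by the value of $X$; the label of the reached sink is the output. An OBDD is a BDD in which on every source–sink path the variables appear at most once and in a fixed order. The weak width of an OBDD (not necessarily complete) is the maximum, over variables $x$, of the number of nodes labeled by $x$. $\exists Z\,D$ is the function on the remaining variables true iff some extension to $Z$ satisfies $D$. *)

(* Defs.v *)
From mathcomp Require Import all_boot.
Set Implicit Arguments. Unset Strict Implicit. Unset Printing Implicit Defensive.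

(* Nodes are
   numbered topologically: every edge from inner node i goes to a sink or
   to an inner node j with i < j.  (Every finite DAG admits such a
   numbering, so this is only a representation choice.)  Variables are
   natural numbers. *)
Inductive target := Sink of bool | Inner of nat.

Record bdd := BDD {
  bdd_n     : nat;
  bdd_label : nat -> nat;
  bdd_lo    : nat -> target;
  bdd_hi    : nat -> target;
  bdd_src   : target
}.

Definition target_ok (m lb : nat) (t : target) : Prop :=
  match t with Sink _ => True | Inner j => lb <= j < m end.

Definition bdd_wf (B : bdd) : Prop :=
  target_ok (bdd_n B) 0 (bdd_src B) /\
  forall i, i < bdd_n B ->
    target_ok (bdd_n B) i.+1 (bdd_lo B i) /\ target_ok (bdd_n B) i.+1 (bdd_hi B i).

(* Evaluation: follow the edges from t; fuel bounds the number of inner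
   nodes visited (bdd_n B fuel suffices for well-formed BDDs). *)
Fixpoint eval_fuel (B : bdd) (fuel : nat) (a : nat -> bool) (t : target) : bool :=
  match t with
  | Sink b => b
  | Inner i =>
      match fuel with
      | 0 => false
      | f.+1 => eval_fuel B f a (if a (bdd_label B i) then bdd_hi B i else bdd_lo B i)
      end
  end.

Definition bdd_eval (B : bdd) (a : nat -> bool) : bool :=
  eval_fuel B (bdd_n B) a (bdd_src B).

(* Ordered: there is a fixed (injective) ranking of the variables such that
   along every edge between inner nodes the rank strictly increases; hence
   on every source-sink path variables appear at most once and in this
   fixed order. *)
Definition bdd_ordered (B : bdd) : Prop :=
  exists pi : nat -> nat, injective pi /\
    forall i j, i < bdd_n B -> (bdd_lo B i = Inner j \/ bdd_hi B i = Inner j) ->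
      pi (bdd_label B i) < pi (bdd_label B j).

Definition is_obdd (B : bdd) : Prop := bdd_wf B /\ bdd_ordered B.

(* Size = number of nodes (inner nodes plus the two sinks). *)
Definition bdd_size (B : bdd) : nat := bdd_n B + 2.

Definition weak_width_le (B : bdd) (w : nat) : Prop :=
  forall x, count (fun i => bdd_label B i == x) (iota 0 (bdd_n B)) <= w.

Definition vars_in (B : bdd) (v : nat) : Prop :=
  forall i, i < bdd_n B -> bdd_label B i < v.

Definition neg_exists (D : bdd) (Z : nat -> bool) (a : nat -> bool) : Prop :=
  ~ exists b : nat -> bool, (forall x, ~~ Z x -> b x = a x) /\ bdd_eval D b = true.

Definition computes (B : bdd) (f : (nat -> bool) -> Prop) : Prop :=
  forall a, bdd_eval B a = true <-> f a.

(* Main.v *)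
Require Import Defs.
From mathcomp Require Import all_boot zify.
Set Implicit Arguments. Unset Strict Implicit. Unset Printing Implicit Defensive.

Definition Dlo (m : nat) (k : nat) : target :=
  if k < m then (if k.+1 < m then Inner k.+1 else Sink false)
  else if k < 2*m then Sink false
  else if k < 13*m then (if ((k - 2*m) %% 11).+1 < 11 then Inner k.+1 else Sink false)
  else Sink false.

Definition Dhi (m : nat) (fn : nat -> nat -> nat) (k : nat) : target :=
  if k < m then Inner (m + k)
  else if k < 2*m then Inner (2*m + (k - m) * 11)
  else if k < 13*m then Inner (13*m + fn ((k - 2*m) %% 11) ((k - 2*m) %/ 11))
  else Sink true.

Definition Dm (m : nat) (fn : nat -> nat -> nat) : bdd :=
  BDD (14*m) id (Dlo m) (Dhi m fn) (if 0 < m then Inner 0 else Sink false).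

Lemma Dm_wf m fn : (forall j i, fn j i < m) -> bdd_wf (Dm m fn).
Proof.
move=> hf; split.
  rewrite /=; case: ifP => //= h; lia.
move=> i /= hi; split.
  rewrite /Dlo; case: ifP => h1; first (case: ifP => h2 /=; [lia|done]).
  case: ifP => h2 //; case: ifP => h3 //; case: ifP => h4 //=; lia.
rewrite /Dhi; case: ifP => h1 /=; first lia.
case: ifP => h2 /=; first lia.
case: ifP => h3 /=; last done.
have := hf ((i - 2 * m) %% 11) ((i - 2 * m) %/ 11); lia.
Qed.

Lemma Dm_obdd m fn : (forall j i, fn j i < m) -> is_obdd (Dm m fn).
Proof.
move=> hf; have wf := Dm_wf hf; split => //.
exists id; split => // i j hi hj /=.
case: wf => _ /(_ i hi) [].
by case: hj => -> /= ? ?; lia.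
Qed.

Lemma Dm_width m fn : weak_width_le (Dm m fn) 3.
Proof.
move=> x /=.
have -> : count (fun i => i == x) (iota 0 (14 * m)) = count_mem x (iota 0 (14*m)).
  by apply: eq_count => i; rewrite eq_sym.
rewrite count_uniq_mem ?iota_uniq //; by case: (_ \in _).
Qed.

Lemma Dm_vars m fn : vars_in (Dm m fn) (14 * m).
Proof. by []. Qed.

Definition DZ (m : nat) (x : nat) : bool := (x < m) || ((2*m <= x) && (x < 13*m)).

Lemma DZ_lt m x : DZ m x -> x < 14 * m.
Proof. rewrite /DZ; lia. Qed.

Definition Wit m (fn : nat -> nat -> nat) (a : nat -> bool) : Prop :=
  exists i j, i < m /\ j < 11 /\ a (m + i) /\ a (13*m + fn j i).

Definition Qinv m fn (b : nat -> bool) (t : target) : Prop :=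
  match t with
  | Sink true => Wit m fn b
  | Sink false => True
  | Inner k => k < 14 * m /\
     (if k < 2*m then True
      else if k < 13*m then is_true (b (m + (k - 2*m) %/ 11))
      else exists i j, i < m /\ j < 11 /\ b (m + i) /\ fn j i = k - 13*m)
  end.

Lemma Qstep m fn b k : (forall j i, fn j i < m) -> Qinv m fn b (Inner k) ->
  Qinv m fn b (if b (bdd_label (Dm m fn) k) then bdd_hi (Dm m fn) k else bdd_lo (Dm m fn) k).
Proof.
move=> hf /= [hk H]; rewrite /Dlo /Dhi.
case: (ltnP k m) => h1.
  case: (b k) => /=; first (split; [lia|]; case: ifP => //; lia).
  case: ifP => //= h2; split; first lia; case: ifP => //; lia.
case: (ltnP k (2*m)) => h2.
  case: ifP => hb //=; split; first lia.
  case: ifP => h3; first lia.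
  case: ifP => h4; last lia.
  have -> : (2 * m + (k - m) * 11 - 2 * m) %/ 11 = k - m by lia.
  by have -> : m + (k - m) = k by lia.
move: H; rewrite (ltnNge k (2*m)) h2 /=.
case: (ltnP k (13*m)) => h3 H.
  case: ifP => hb.
    split; first by have := hf ((k - 2 * m) %% 11) ((k - 2 * m) %/ 11); lia.
    rewrite ifF; last lia. rewrite ifF; last lia.
    exists ((k - 2 * m) %/ 11), ((k - 2 * m) %% 11); split; first lia.
    split; first lia. split => //; lia.
  case: ifP => h4 //=; split; first lia.
  rewrite ifF; last lia.
  case: ifP => h5; last lia.
  by have -> : (k.+1 - 2 * m) %/ 11 = (k - 2 * m) %/ 11 by lia.
case: ifP => hb //=.
case: H => i [j [hi [hj [hbi e]]]].
exists i, j; do 3 split => //.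
by have -> : 13 * m + fn j i = k by have := hf j i; lia.
Qed.

Lemma Dm_sound m fn b : (forall j i, fn j i < m) -> bdd_eval (Dm m fn) b = true -> Wit m fn b.
Proof.
move=> hf.
suff H : forall f t, Qinv m fn b t -> eval_fuel (Dm m fn) f b t = true -> Wit m fn b.
  apply: H; rewrite /=; case: ifP => //= h; split; [lia|]; rewrite ifT //; lia.
elim=> [|f IH] [[]|k] //=.
move=> hq; apply: IH; exact: (Qstep hf hq).
Qed.

Definition bwit m (a : nat -> bool) i0 j0 (v : nat) : bool :=
  if DZ m v then (v == i0) || (v == 2*m + i0*11 + j0) else a v.

Lemma DZF m x : m <= x -> (x < 2*m) \/ (13*m <= x) -> DZ m x = false.
Proof.
move=> h1 h2; rewrite /DZ ltnNge h1 /=; apply/negbTE; rewrite negb_and -ltnNge -leqNgt.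
by case: h2 => h; apply/orP; [left|right].
Qed.
Lemma DZT m x : (x < m) \/ (2*m <= x /\ x < 13*m) -> DZ m x.
Proof. by rewrite /DZ; case=> [->//|[h1 h2]]; rewrite h1 h2 orbT. Qed.

Lemma bwitZ m a i0 j0 v : DZ m v -> bwit m a i0 j0 v = (v == i0) || (v == 2*m + i0*11 + j0).
Proof. by rewrite /bwit => ->. Qed.
Lemma bwitNZ m a i0 j0 v : DZ m v = false -> bwit m a i0 j0 v = a v.
Proof. by rewrite /bwit => ->. Qed.

Lemma Dm_complete m fn (a : nat -> bool) i0 j0 : (forall j i, fn j i < m) ->
  i0 < m -> j0 < 11 -> a (m + i0) -> a (13*m + fn j0 i0) ->
  bdd_eval (Dm m fn) (bwit m a i0 j0) = true.
Proof.
move=> hf hi0 hj0 ha hy.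
set b := bwit m a i0 j0.
have hfj := hf j0 i0.
have hB : forall f, 0 < f -> eval_fuel (Dm m fn) f b (Inner (13*m + fn j0 i0)) = true.
  case=> // f _ /=.
  rewrite /b bwitNZ; last by apply: DZF; lia.
  rewrite hy /Dhi ifF; last lia. rewrite ifF; last lia. rewrite ifF; last lia. by case: f.
have hC : forall j, j <= j0 -> forall f, j0 - j + 2 <= f ->
    eval_fuel (Dm m fn) f b (Inner (2*m + i0*11 + j)) = true.
  move=> j; move: {2}(j0 - j) (erefl (j0 - j)) => r; elim: r j => [|r IH] j hr hj [|f] hf'; try lia.
    have -> : j = j0 by lia.
    rewrite /= /b bwitZ; last by apply: DZT; lia.
    rewrite eqxx orbT /Dhi ifF; last lia. rewrite ifF; last lia. rewrite ifT; last lia.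
    have -> : (2 * m + i0 * 11 + j0 - 2 * m) %% 11 = j0 by lia.
    have -> : (2 * m + i0 * 11 + j0 - 2 * m) %/ 11 = i0 by lia.
    apply: hB; lia.
  rewrite /= /b bwitZ; last by apply: DZT; lia.
  have -> : (2 * m + i0 * 11 + j == i0) || (2 * m + i0 * 11 + j == 2 * m + i0 * 11 + j0) = false.
    apply/negbTE; rewrite negb_or; apply/andP; split; apply/eqP; lia.
  rewrite /Dlo ifF; last lia. rewrite ifF; last lia. rewrite ifT; last lia.
  rewrite ifT; last lia.
  have -> : (2 * m + i0 * 11 + j).+1 = 2 * m + i0 * 11 + j.+1 by lia.
  apply: IH; lia.
have hA : forall f, j0 + 3 <= f -> eval_fuel (Dm m fn) f b (Inner (m + i0)) = true.
  case=> [|f] hf'; first lia.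
  rewrite /= /b bwitNZ; last by apply: DZF; lia.
  rewrite ha /Dhi ifF; last lia. rewrite ifT; last lia.
  have -> : 2 * m + (m + i0 - m) * 11 = 2 * m + i0 * 11 + 0 by lia.
  apply: hC; lia.
have hS : forall i, i <= i0 -> forall f, i0 - i + j0 + 4 <= f -> eval_fuel (Dm m fn) f b (Inner i) = true.
  move=> i; move: {2}(i0 - i) (erefl (i0 - i)) => r; elim: r i => [|r IH] i hr hi [|f] hf'; try lia.
    have -> : i = i0 by lia.
    rewrite /= /b bwitZ; last by apply: DZT; lia.
    rewrite eqxx /Dhi ifT; last lia.
    apply: hA; lia.
  rewrite /= /b bwitZ; last by apply: DZT; lia.
  have -> : (i == i0) || (i == 2 * m + i0 * 11 + j0) = false.
    apply/negbTE; rewrite negb_or; apply/andP; split; apply/eqP; lia.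
  rewrite /Dlo ifT; last lia. rewrite ifT; last lia.
  apply: IH; lia.
rewrite /bdd_eval /= ifT; last lia.
apply: hS; lia.
Qed.

Lemma Dm_neg m fn (a : nat -> bool) : (forall j i, fn j i < m) ->
  neg_exists (Dm m fn) (DZ m) a <-> ~ Wit m fn a.
Proof.
move=> hf; split.
  move=> H [i [j [hi [hj [h1 h2]]]]]; apply: H.
  exists (bwit m a i j); split; last exact: Dm_complete.
  by move=> x /negbTE hx; rewrite /bwit hx.
move=> H [b [hb /(Dm_sound hf) [i [j [hi [hj [h1 h2]]]]]]]; apply: H.
have hfj := hf j i.
exists i, j; do 2 split => //.
rewrite -!hb //; apply/negbT; apply: DZF; lia.
Qed.

Definition bstep (B : bdd) (a : nat -> bool) (k : nat) : target :=
  if a (bdd_label B k) then bdd_hi B k else bdd_lo B k.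

Lemma eval_fuel_ind (B : bdd) a : bdd_wf B -> forall f1 f2 t lb,
  target_ok (bdd_n B) lb t -> bdd_n B - lb <= f1 -> bdd_n B - lb <= f2 ->
  eval_fuel B f1 a t = eval_fuel B f2 a t.
Proof.
move=> [_ wf]; elim=> [|f1 IH] f2 [b|k] lb //=; try by case: f2.
  move=> h; lia.
case: f2 => [|f2] h h1 h2; first lia.
rewrite /=; have [hl hh] := wf k (proj2 (andP h)).
apply: (IH _ _ k.+1); try lia.
by case: (a _).
Qed.

Definition mix (pi : nat -> nat) (th : nat) (a b : nat -> bool) (v : nat) : bool :=
  if pi v < th then a v else b v.

Fixpoint run (B : bdd) (pi : nat -> nat) (th : nat) (f : nat) (a : nat -> bool) (t : target) : target :=
  match f with
  | 0 => t
  | f'.+1 => match t with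
             | Inner k => if pi (bdd_label B k) < th then run B pi th f' a (bstep B a k) else t
             | Sink _ => t
             end
  end.

Definition tcode (t : target) : nat :=
  match t with Sink false => 0 | Sink true => 1 | Inner k => k.+2 end.

Lemma tcode_inj : injective tcode.
Proof. by case=> [[]|k] [[]|k'] //= [->]. Qed.

Lemma fooling (B : bdd) (pi : nat -> nat) (th : nat) (F : (nat -> bool) -> Prop)
  (I : finType) (al : I -> nat -> bool) :
  bdd_wf B ->
  (forall i j, i < bdd_n B -> (bdd_lo B i = Inner j \/ bdd_hi B i = Inner j) ->
      pi (bdd_label B i) < pi (bdd_label B j)) ->
  computes B F ->
  (forall x y : I, x != y -> exists be : nat -> bool,
      ~ (F (mix pi th (al x) be) <-> F (mix pi th (al y) be))) ->
  #|I| <= bdd_n B + 2.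
Proof.
move=> wf ord comp hdiff.
set n := bdd_n B.
have wf2 := proj2 wf.
have okstep : forall a k, k < n -> target_ok n k.+1 (bstep B a k).
  by move=> a k hk; rewrite /bstep; have [? ?] := wf2 k hk; case: (a _).
have ok0 : forall t lb, target_ok n lb t -> target_ok n 0 t.
  by move=> [b|k] lb //= /andP[_ ->].
have E2 : forall a k, k < n -> eval_fuel B n a (Inner k) = eval_fuel B n a (bstep B a k).
  move=> a k hk; have hn : n = (n - 1).+1 by lia.
  rewrite {1}hn /= -/(bstep B a k).
  apply: (@eval_fuel_ind B a wf (n-1) n _ k.+1); [exact: okstep| |]; rewrite -/n; lia.
have R1 : forall a f t, target_ok n 0 t -> eval_fuel B n a t = eval_fuel B n a (run B pi th f a t).
  move=> a; elim=> [|f IH] [b|k] //= hk.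
  case: ifP => // _; rewrite E2 //; apply: IH; apply: ok0; exact: okstep.
have R2 : forall a a', (forall v, pi v < th -> a v = a' v) ->
    forall f t, run B pi th f a t = run B pi th f a' t.
  move=> a a' ha; elim=> [|f IH] [b|k] //=.
  case: ifP => // h; rewrite /bstep ha //; exact: IH.
pose good t := target_ok n 0 t /\ (forall k, t = Inner k -> th <= pi (bdd_label B k)).
have R3 : forall a f t lb, target_ok n lb t -> n - lb <= f -> good (run B pi th f a t).
  move=> a; elim=> [|f IH] [b|k] lb //=.
    move=> h; lia.
  move=> h hf; case: ifP => hp.
    apply: (IH _ k.+1); [exact: okstep (proj2 (andP h))|lia].
  split; first exact: (ok0 (Inner k) lb h).
  by move=> k' [<-]; rewrite leqNgt hp.
have R4 : forall a a', (forall v, th <= pi v -> a v = a' v) -> forall f t,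
    target_ok n 0 t -> (forall k, t = Inner k -> th <= pi (bdd_label B k)) ->
    eval_fuel B f a t = eval_fuel B f a' t.
  move=> a a' ha; elim=> [|f IH] [b|k] //= hk hp.
  have hpk := hp k erefl.
  rewrite ha //.
  have hkn : k < n := hk.
  have [hl hh] := wf2 k hkn.
  apply: IH.
    by case: (a' _); [apply: ok0 hh|apply: ok0 hl].
  move=> j hj; apply: leq_trans hpk _; apply: ltnW; apply: ord => //.
  by case: (a' _) hj => hj; [right|left].
pose stop x := run B pi th n (al x) (bdd_src B).
have gstop : forall x, good (stop x).
  move=> x; apply: (R3 _ _ _ 0); [exact: proj1 wf|lia].
have hinj : injective stop.
  move=> x y hxy; apply/eqP; apply/negP => /negP hne.
  have [be hbe] := hdiff x y hne; apply: hbe.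
  have key : forall z, F (mix pi th (al z) be) <->
      eval_fuel B n (mix pi th (al z) be) (stop z) = true.
    move=> z; rewrite -comp /bdd_eval -/n (R1 _ n); last exact: ok0 (proj1 wf).
    rewrite /stop (R2 (mix pi th (al z) be) (al z)) //.
    by move=> v hv; rewrite /mix hv.
  rewrite key key hxy (R4 (mix pi th (al x) be) (mix pi th (al y) be)) //;
    try (by case: (gstop y)).
  by move=> v hv; rewrite /mix ltnNge hv.
have hc : forall x, tcode (stop x) < n.+2.
  move=> x; case: (gstop x) => h _; case: (stop x) h => [[]|k] //=; lia.
pose g (x : I) : 'I_(n.+2) := inord (tcode (stop x)).
have ginj : injective g.
  move=> x y /(congr1 (@nat_of_ord _)); rewrite /g !inordK // => /tcode_inj; exact: hinj.
have := leq_card g ginj; rewrite card_ord; lia.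
Qed.

Definition adjg m (g : {ffun 'I_11 * 'I_m -> 'I_m}) (x y : 'I_m) : bool :=
  [exists j : 'I_11, g (j, x) == y].

Definition goodb m p (g : {ffun 'I_11 * 'I_m -> 'I_m}) : bool :=
  [forall P : {set 'I_m}, forall Q : {set 'I_m}, (#|P| == p) ==> (#|Q| == p) ==>
     [exists x in P, exists y in Q, adjg g x y]].

Lemma card_sets (T : finType) : #|{set T}| = 2 ^ #|T|.
Proof.
transitivity #|powerset [set: T]|; last by rewrite card_powerset cardsT.
by apply: eq_card => A; rewrite !inE subsetT.
Qed.

Lemma prod_foldr (T : finType) (h : T -> nat) : foldr muln 1 [seq h z | z : T] = \prod_z h z.
Proof.
rewrite foldrE big_map big_enum /=. done.
Qed.

Definition avoid m (P Q : {set 'I_m}) : pred {ffun 'I_11 * 'I_m -> 'I_m} :=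
  [pred g : {ffun 'I_11 * 'I_m -> 'I_m} | [forall x in P, forall j : 'I_11, g (j, x) \notin Q]].

Lemma card_avoid m (P Q : {set 'I_m}) :
  #|avoid P Q| = (m - #|Q|) ^ (#|P| * 11) * m ^ ((m - #|P|) * 11).
Proof.
pose F (z : 'I_11 * 'I_m) : pred 'I_m := [pred y | (z.2 \in P) ==> (y \notin Q)].
have -> : #|avoid P Q| = #|(family F : simpl_pred {ffun 'I_11 * 'I_m -> 'I_m})|.
  apply: eq_card => g; rewrite !inE; apply/forall_inP/familyP => /= H.
    by case=> j x; rewrite /F inE /=; apply/implyP => hx; move/forallP: (H x hx).
  by move=> x hx; apply/forallP => j; have := H (j, x); rewrite /F inE /= hx.
rewrite card_family prod_foldr.
rewrite -(pair_big xpredT xpredT (fun j x => #|F (j, x)|)) /=.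
have inner : forall j : 'I_11, \prod_(x : 'I_m) #|F (j, x)| = (m - #|Q|) ^ #|P| * m ^ (m - #|P|).
  have cQ : #|[predC Q]| = m - #|Q| by have := cardC Q; rewrite card_ord; lia.
  have cP : #|[predC P]| = m - #|P| by have := cardC P; rewrite card_ord; lia.
  move=> j; rewrite (bigID (fun x => x \in P)) /=.
  rewrite (eq_bigr (fun _ => m - #|Q|)); last first.
    move=> x hx; rewrite -cQ.
    by apply: eq_card => y; rewrite /F !inE /= hx.
  rewrite [X in _ * X](eq_bigr (fun _ => m)); last first.
    move=> x hx; rewrite -[RHS](card_ord m).
    by apply: eq_card => y; rewrite /F !inE /= (negbTE hx).
  rewrite !prod_nat_const; congr (_ * _); congr (_ ^ _).
  by rewrite -cP; apply: eq_card => x; rewrite !inE.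
rewrite (eq_bigr _ (fun j _ => inner j)) prod_nat_const card_ord.
by rewrite expnMn -!expnM.
Qed.

Lemma num_ineq mu : 0 < mu ->
  2 ^ (3 * mu) * 2 ^ (3 * mu) * ((3 * mu - mu) ^ (mu * 11) * (3 * mu) ^ ((3 * mu - mu) * 11))
  < (3 * mu) ^ (11 * (3 * mu)).
Proof.
move=> hmu.
have -> : 3 * mu - mu = 2 * mu by lia.
have -> : 11 * (3 * mu) = mu * 11 + 2 * mu * 11 by lia.
rewrite expnD mulnA ltn_pmul2r; last by rewrite expn_gt0; lia.
have -> : 2 ^ (3 * mu) * 2 ^ (3 * mu) = 64 ^ mu by rewrite -expnD -(expnM 2 6); congr (_ ^ _); lia.
rewrite mulnC (mulnC mu 11) !(expnM _ 11 mu) -expnMn ltn_exp2r //.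
rewrite !expnMn mulnAC ltn_pmul2r; last by rewrite expn_gt0 hmu.
by [].
Qed.

Lemma good_exists mu : 0 < mu -> exists g, @goodb (3 * mu) mu g.
Proof.
move=> hmu; set m := 3 * mu.
case: (boolP [exists g, @goodb m mu g]) => [/existsP //|/existsPn H]; exfalso.
pose T := {ffun 'I_11 * 'I_m -> 'I_m}.
pose cond (PQ : {set 'I_m} * {set 'I_m}) := (#|PQ.1| == mu) && (#|PQ.2| == mu).
have cT : #|T| = m ^ (11 * m) by rewrite card_ffun card_prod !card_ord.
have key : #|T| <= \sum_(PQ | cond PQ) #|avoid PQ.1 PQ.2|.
  have -> : #|T| = \sum_(g : T) 1 by rewrite sum1_card.
  have -> : \sum_(PQ | cond PQ) #|avoid PQ.1 PQ.2| =
            \sum_(PQ | cond PQ) \sum_(g : T) (g \in avoid PQ.1 PQ.2 : nat).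
    apply: eq_bigr => PQ _; rewrite -sum1_card big_mkcond /=.
    by apply: eq_bigr => g _; case: (_ \in _).
  rewrite exchange_big /=; apply: leq_sum => g _.
  have := H g; rewrite negb_forall => /existsP [P].
  rewrite negb_forall => /existsP [Q].
  rewrite negb_imply => /andP [hP]; rewrite negb_imply => /andP [hQ hn].
  rewrite (bigD1 (P, Q)) /=; last by rewrite /cond /= hP hQ.
  suff -> : g \in avoid P Q by [].
  rewrite inE /=; apply/forall_inP => x hx; apply/forallP => j; apply/negP => hy.
  move: hn; rewrite negb_exists_in => /forall_inP /(_ x hx).
  rewrite negb_exists_in => /forall_inP /(_ _ hy) /negP; apply.
  by apply/existsP; exists j.
have bnd : \sum_(PQ | cond PQ) #|avoid PQ.1 PQ.2|
    <= 2 ^ m * 2 ^ m * ((m - mu) ^ (mu * 11) * m ^ ((m - mu) * 11)).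
  apply: (leq_trans (n := \sum_(PQ : {set 'I_m} * {set 'I_m}) ((m - mu) ^ (mu * 11) * m ^ ((m - mu) * 11)))).
    rewrite big_mkcond /=; apply: leq_sum => PQ _.
    case: ifP => // /andP [/eqP h1 /eqP h2]; by rewrite card_avoid h1 h2.
  by rewrite sum_nat_const card_prod card_sets card_ord.
have := leq_trans key bnd; rewrite cT leqNgt.
by move/negP; apply; apply: num_ineq.
Qed.

Lemma subset_card_eq (T : finType) (A : {set T}) k : k <= #|A| ->
  exists B : {set T}, B \subset A /\ #|B| = k.
Proof.
move=> hk; exists [set x in take k (enum A)]; split.
  by apply/subsetP => x; rewrite inE => /mem_take; rewrite mem_enum.
rewrite cardsE; have /card_uniqP -> : uniq (take k (enum A)) by rewrite take_uniq // enum_uniq.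
by rewrite size_take -cardE; case: ltnP => // h; apply/eqP; rewrite eqn_leq hk h.
Qed.

Lemma greedy (X Y : finType) (r : X -> Y -> bool) (p Dc Db : nat) :
  (forall (P : {set X}) (Q : {set Y}), p <= #|P| -> p <= #|Q| ->
     exists x y, [/\ x \in P, y \in Q & r x y]) ->
  forall k (C : {set X}) (T : {set Y}),
  (forall x, x \in C -> #|[set y | r x y]| <= Dc) ->
  (forall y, y \in T -> #|[set x | r x y]| <= Db) ->
  p + k * Db <= #|C| -> p + k * Dc <= #|T| ->
  exists s : seq (X * Y), [/\ size s = k, uniq s,
   (forall e, e \in s -> [/\ e.1 \in C, e.2 \in T & r e.1 e.2]) &
   (forall e e', e \in s -> e' \in s -> r e.1 e'.2 -> e = e')].
Proof.
move=> good; elim=> [|k IH] C T hC hT hc ht.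
  by exists [::]; split.
have [c [b [hcC hbT hcb]]] := good C T (leq_trans (leq_addr _ _) hc) (leq_trans (leq_addr _ _) ht).
pose C' := C :\: [set x | r x b].
pose T' := T :\: [set y | r c y].
have cC' : #|C| - Db <= #|C'|.
  rewrite /C' cardsD; apply: leq_sub2l; apply: leq_trans (hT b hbT).
  by apply: subset_leq_card; apply: subsetIr.
have cT' : #|T| - Dc <= #|T'|.
  rewrite /T' cardsD; apply: leq_sub2l; apply: leq_trans (hC c hcC).
  by apply: subset_leq_card; apply: subsetIr.
have [s [hs1 hs2 hs3 hs4]] := IH C' T'
  (fun x hx => hC x (subsetP (subsetDl _ _) x hx))
  (fun y hy => hT y (subsetP (subsetDl _ _) y hy))
  (leq_trans (ltac:(lia) : p + k * Db <= #|C| - Db) cC')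
  (leq_trans (ltac:(lia) : p + k * Dc <= #|T| - Dc) cT').
have hsC : forall e, e \in s -> ~~ r e.1 b.
  by move=> e /hs3 [] /setDP [_]; rewrite inE.
have hsT : forall e, e \in s -> ~~ r c e.2.
  by move=> e /hs3 [_] /setDP [_]; rewrite inE.
exists ((c, b) :: s); split => //=.
- by rewrite hs1.
- rewrite hs2 andbT; apply/negP => /hsC /=; by rewrite hcb.
- move=> e; rewrite inE => /orP [/eqP -> //|/hs3 [h1 h2 h3]].
  by split => //; [apply: (subsetP (subsetDl _ _)) h1|apply: (subsetP (subsetDl _ _)) h2].
- move=> e e'; rewrite !inE => /orP [/eqP ->|he] /orP [/eqP ->|he'] //= hr.
  + by move: (hsT _ he'); rewrite hr.
  + by move: (hsC _ he); rewrite hr.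
  + exact: hs4.
Qed.

Lemma final_bound (B : bdd) (pi : nat -> nat) (th m : nat) (R : 'I_m -> 'I_m -> bool)
  (ea eb : 'I_m -> nat) (s : seq ('I_m * 'I_m)) :
  bdd_wf B ->
  (forall i j, i < bdd_n B -> (bdd_lo B i = Inner j \/ bdd_hi B i = Inner j) ->
      pi (bdd_label B i) < pi (bdd_label B j)) ->
  computes B (fun a => ~ (exists u w, [/\ R u w, a (ea u) & a (eb w)])) ->
  injective ea -> injective eb -> (forall u w, ea u != eb w) ->
  uniq s ->
  (forall e, e \in s -> [/\ pi (ea e.1) < th, th <= pi (eb e.2) & R e.1 e.2]) ->
  (forall e e', e \in s -> e' \in s -> R e.1 e'.2 -> e = e') ->
  2 ^ size s <= bdd_n B + 2.
Proof.
move=> wf ord comp iea ieb dis us hs hpriv.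
set t := size s.
case: s us hs hpriv @t => [|e0 s0] us hs hpriv t.
  by rewrite /t /=; lia.
set s := e0 :: s0 in us hs hpriv t *.
pose sk (k : 'I_t) := nth e0 s k.
have skin : forall k : 'I_t, sk k \in s by move=> k; apply: mem_nth.
pose al (S : {set 'I_t}) (v : nat) := [exists k in S, v == ea (sk k).1].
pose W (a : nat -> bool) := exists u w, [/\ R u w, a (ea u) & a (eb w)].
have key : forall (S : {set 'I_t}) (k : 'I_t),
    W (mix pi th (al S) (fun v => v == eb (sk k).2)) <-> k \in S.
  move=> S k; split.
    case=> u [w [hr hu hw]].
    move: hw; rewrite /mix; case: ifP => hpw.
      by case/existsP => l /andP [_ /eqP e]; move: (dis (sk l).1 w); rewrite e eqxx.
    move/eqP/ieb => ew.
    move: hu; rewrite /mix; case: ifP => hpu; last first.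
      by move/eqP => e; move: (dis u (sk k).2); rewrite e eqxx.
    case/existsP => l /andP [hl /eqP /iea eu].
    have := hpriv _ _ (skin l) (skin k); rewrite -eu -ew => /(_ hr).
    move/eqP; rewrite /sk nth_uniq // => /eqP e.
    by have -> : k = l by apply: val_inj.
  move=> hk; exists (sk k).1, (sk k).2.
  have [h1 h2 h3] := hs _ (skin k).
  split => //; rewrite /mix.
    by rewrite h1; apply/existsP; exists k; rewrite hk eqxx.
  by rewrite ltnNge h2 /= eqxx.
have := @fooling B pi th (fun a => ~ W a) _ al wf ord comp.
rewrite card_sets card_ord; apply.
move=> S S' hne.
have [k hk] : exists k, (k \in S) != (k \in S').
  case: (boolP [exists k, (k \in S) != (k \in S')]) => [/existsP //|/existsPn H].
  have e : S = S' by apply/setP => x; have := H x; rewrite negbK => /eqP.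
  by rewrite e eqxx in hne.
exists (fun v => v == eb (sk k).2).
rewrite !key => [[h1 h2]].
move: hk; case: (k \in S) h1 h2; case: (k \in S') => //= h1 h2.
- by case: h2.
- by case: h1.
Qed.

Definition fnG m (g : {ffun 'I_11 * 'I_m -> 'I_m}) (j i : nat) : nat :=
  match (insub j : option 'I_11), (insub i : option 'I_m) with
  | Some j', Some i' => val (g (j', i'))
  | _, _ => 0
  end.

Lemma fnG_lt m (g : {ffun 'I_11 * 'I_m -> 'I_m}) j i : 0 < m -> fnG g j i < m.
Proof.
move=> hm; rewrite /fnG.
case: (insub j) => [j'|] //; case: (insub i) => [i'|] //; exact: ltn_ord.
Qed.

Lemma fnG_val m (g : {ffun 'I_11 * 'I_m -> 'I_m}) (j : 'I_11) (x : 'I_m) :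
  fnG g j x = g (j, x).
Proof. by rewrite /fnG !valK. Qed.

Lemma WitE m (g : {ffun 'I_11 * 'I_m -> 'I_m}) (a : nat -> bool) :
  Wit m (fnG g) a <-> exists u w : 'I_m, [/\ adjg g u w, a (m + u) & a (13 * m + w)].
Proof.
split.
  case=> i [j [hi [hj [h1 h2]]]].
  pose x := Ordinal hi; pose j' := Ordinal hj.
  have e : fnG g j i = g (j', x) by rewrite -fnG_val.
  exists x, (g (j', x)); split => //; last by rewrite -e.
  by apply/existsP; exists j'.
case=> u [w [/existsP [j /eqP e] h1 h2]].
exists u, j; do 3 split => //.
by rewrite fnG_val e.
Qed.

Lemma goodge m mu (g : {ffun 'I_11 * 'I_m -> 'I_m}) : goodb mu g ->
  forall (P Q : {set 'I_m}), mu <= #|P| -> mu <= #|Q| ->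
    exists x y, [/\ x \in P, y \in Q & adjg g x y].
Proof.
move=> /forallP H P Q hP hQ.
have [P' [sP cP]] := subset_card_eq hP.
have [Q' [sQ cQ]] := subset_card_eq hQ.
move: (H P') => /forallP /(_ Q'); rewrite cP cQ eqxx /=.
case/exists_inP => x hx /exists_inP [y hy hr].
by exists x, y; split => //; [apply: (subsetP sP)|apply: (subsetP sQ)].
Qed.

Lemma outdeg m (g : {ffun 'I_11 * 'I_m -> 'I_m}) x : #|[set y | adjg g x y]| <= 11.
Proof.
have -> : [set y | adjg g x y] = [set g (j, x) | j : 'I_11].
  apply/setP => y; rewrite !inE; apply/existsP/imsetP => [[j /eqP <-]|[j _ ->]].
    by exists j.
  by exists j.
by apply: leq_trans (leq_imset_card _ _) _; rewrite card_ord.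
Qed.

Lemma card_sum (T : finType) (P : pred T) : #|[set x | P x]| = \sum_x (P x : nat).
Proof.
rewrite -sum1_card big_mkcond /=; apply: eq_bigr => x _; rewrite !inE.
by case: (P x).
Qed.

Lemma high_bound m (g : {ffun 'I_11 * 'I_m -> 'I_m}) :
  132 * #|[set y | 131 < #|[set x | adjg g x y]|]| <= 11 * m.
Proof.
set high := [set y | _].
have e1 : \sum_y #|[set x | adjg g x y]| = \sum_x #|[set y | adjg g x y]|.
  rewrite (eq_bigr (fun y => \sum_x (adjg g x y : nat))); last by move=> y _; rewrite card_sum.
  rewrite exchange_big /=; apply: eq_bigr => x _; by rewrite card_sum.
have e2 : \sum_x #|[set y | adjg g x y]| <= 11 * m.
  apply: (leq_trans (n := \sum_(x : 'I_m) 11)); first by apply: leq_sum => x _; apply: outdeg.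
  by rewrite sum_nat_const card_ord mulnC.
apply: leq_trans e2; rewrite -e1.
apply: (leq_trans (n := \sum_(y in high) #|[set x | adjg g x y]|)).
  rewrite mulnC -sum_nat_const; apply: leq_sum => y; by rewrite inE.
by rewrite [X in _ <= X](bigID (fun y => y \in high)) /= leq_addr.
Qed.

Lemma cnt_inc m (f : 'I_m -> nat) : injective f -> forall t,
  #|[set i | f i < t.+1]| <= #|[set i | f i < t]|.+1.
Proof.
move=> finj t.
have sub : [set i | f i < t.+1] \subset [set i | f i < t] :|: [set i | f i == t].
  by apply/subsetP => i; rewrite !inE ltnS leq_eqVlt orbC.
apply: leq_trans (subset_leq_card sub) _.
rewrite cardsU -addn1; apply: leq_trans (leq_subr _ _) _; rewrite leq_add2l.
apply/card_le1_eqP => x y; rewrite !inE => /eqP hx /eqP hy; apply: finj; by rewrite hx hy.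
Qed.

Lemma cnt0 m (f : 'I_m -> nat) : #|[set i | f i < 0]| = 0.
Proof. by apply/eqP; rewrite cards_eq0; apply/eqP/setP => i; rewrite !inE. Qed.

Lemma cntbig m (f : 'I_m -> nat) : #|[set i | f i < (\sum_i f i).+1]| = m.
Proof.
have -> : [set i | f i < (\sum_i f i).+1] = setT.
  apply/setP => i; rewrite !inE ltnS (bigD1 i) //=; exact: leq_addr.
by rewrite cardsT card_ord.
Qed.

Lemma cut_choose (cX cY : nat -> nat) h T : 0 < h -> cX 0 = 0 -> cY 0 = 0 ->
  (forall t, cX t.+1 <= (cX t).+1) -> (forall t, cY t.+1 <= (cY t).+1) -> h <= cX T ->
  exists t, (h <= cX t /\ cY t <= h) \/ (h <= cY t /\ cX t <= h).
Proof.
move=> hh cx0 cy0 incX incY hT.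
have ex : exists t, (h <= cX t) || (h <= cY t) by exists T; rewrite hT.
case: (ex_minnP ex) => t Pt tmin.
case: t Pt tmin => [|t] Pt tmin; first by move: Pt; rewrite cx0 cy0; lia.
have nt : ~~ ((h <= cX t) || (h <= cY t)).
  by apply/negP => /tmin; rewrite ltnn.
exists t.+1; move: (incX t) (incY t); case/orP: Pt => hp hx hy; [left|right]; lia.
Qed.

Lemma computes_ext B (F G : (nat -> bool) -> Prop) :
  computes B F -> (forall a, F a <-> G a) -> computes B G.
Proof. by move=> h e a; rewrite h e. Qed.

Definition mu_of n := 524 * n.+1.
Lemma mu_pos n : 0 < mu_of n. Proof. rewrite /mu_of; lia. Qed.
Definition Gr n : {ffun 'I_11 * 'I_(3 * mu_of n) -> 'I_(3 * mu_of n)} :=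
  xchoose (good_exists (mu_pos n)).
Lemma Gr_good n : goodb (mu_of n) (Gr n).
Proof. exact: (xchooseP (good_exists (mu_pos n))). Qed.
Definition Dn n := Dm (3 * mu_of n) (fnG (Gr n)).
Definition Zn n := DZ (3 * mu_of n).
Definition nvn n := 14 * (3 * mu_of n).

Theorem lemma4 :
  exists c : nat, exists D : nat -> bdd, exists nv : nat -> nat,
  exists Z : nat -> nat -> bool,
    (forall n,
       is_obdd (D n) /\ nv n <= c * n + c /\ vars_in (D n) (nv n) /\
       weak_width_le (D n) 3 /\ (forall x, Z n x -> x < nv n)) /\
    (* the minimal OBDD size of  not (exists Z_n, D_n)  is not 2^{o(n)} *)
    exists k : nat, 0 < k /\
      forall N, exists n, N <= n /\
        forall B, is_obdd B -> computes B (neg_exists (D n) (Z n)) ->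
          2 ^ n <= bdd_size B ^ k.
Proof.
exists (14 * 1572), Dn, nvn, Zn; split.
  move=> n; have hm : 0 < 3 * mu_of n by have := mu_pos n; lia.
  split; first by apply: Dm_obdd => j i; apply: fnG_lt.
  split; first by rewrite /nvn /mu_of; lia.
  split; first exact: Dm_vars.
  split; first exact: Dm_width.
  exact: DZ_lt.
exists 1; split => // N; exists N; split => // B [wf [pi [piinj ord]]] hc.
rewrite expn1 /bdd_size.
set nu := 262 * N.+1.
set m := 3 * mu_of N.
have em : m = 6 * nu by rewrite /m /nu /mu_of; lia.
set G := Gr N.
have hm : 0 < m by rewrite em /nu; lia.
have emu : mu_of N = 2 * nu by rewrite /mu_of /nu; lia.
have enu : nu = 262 * N.+1 by [].
have hcW : computes B (fun a => ~ Wit m (fnG G) a).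
  apply: (@computes_ext B _ _ hc) => a; apply: Dm_neg => j i; exact: fnG_lt.
have hc1 : computes B (fun a => ~ exists u w : 'I_m, [/\ adjg G u w, a (m + u) & a (13 * m + w)]).
  by apply: (@computes_ext B _ _ hcW) => a; rewrite WitE.
have hc2 : computes B (fun a => ~ exists u w : 'I_m,
     [/\ (fun y x => adjg G x y) u w, a (13 * m + u) & a (m + w)]).
  apply: (@computes_ext B _ _ hc1) => a; split => H [u [w [h1 h2 h3]]]; apply: H.
    by exists w, u.
  by exists w, u.
have gd := goodge (Gr_good N).
pose xv (i : 'I_m) := m + i.
pose yv (i : 'I_m) := 13 * m + i.
have xinj : injective xv by move=> i j /eqP; rewrite eqn_add2l => /eqP /val_inj.
have yinj : injective yv by move=> i j /eqP; rewrite eqn_add2l => /eqP /val_inj.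
have xyd : forall u w, xv u != yv w.
  by move=> u w; apply/eqP; rewrite /xv /yv; have := ltn_ord u; lia.
have pxinj : injective (fun i => pi (xv i)) by move=> i j /piinj /xinj.
have pyinj : injective (fun i => pi (yv i)) by move=> i j /piinj /yinj.
pose cX t := #|[set i | pi (xv i) < t]|.
pose cY t := #|[set i | pi (yv i) < t]|.
have [th hth] : exists th, (3 * nu <= cX th /\ cY th <= 3 * nu) \/ (3 * nu <= cY th /\ cX th <= 3 * nu).
  apply: (@cut_choose cX cY (3 * nu) (\sum_i pi (xv i)).+1).
  - rewrite /nu; lia.
  - exact: cnt0.
  - exact: cnt0.
  - exact: (cnt_inc pxinj).
  - exact: (cnt_inc pyinj).
  - by rewrite /cX cntbig; lia.
pose high := [set y | 131 < #|[set x | adjg G x y]|].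
have hh : 132 * #|high| <= 11 * m by apply: high_bound.
have cnotin : forall (f : 'I_m -> nat), #|[set i | ~~ (f i < th)]| = m - #|[set i | f i < th]|.
  move=> f; have e1 := cardsC [set i | f i < th]; rewrite card_ord in e1.
  have e2 : #|~: [set i | f i < th]| = #|[set i | ~~ (f i < th)]|.
    by apply: eq_card => i; rewrite !inE.
  lia.
have cD : forall (A : {set 'I_m}), #|A| - #|high| <= #|A :\: high|.
  by move=> A; rewrite cardsD leq_sub2l // subset_leq_card // subsetIr.
case: hth => [[h1 h2]|[h1 h2]].
-
  pose C := [set i | pi (xv i) < th].
  pose T := [set i | ~~ (pi (yv i) < th)] :\: high.
  have hC : 2 * nu + N.+1 * 131 <= #|C|.
    rewrite /C -/(cX th); move: (cX th) h1 => a h1; clear -h1 enu; clearbody nu; lia.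
  have hT : 2 * nu + N.+1 * 11 <= #|T|.
    have := cD [set i | ~~ (pi (yv i) < th)]; rewrite cnotin -/(cY th) -/T.
    move: (cY th) (#|high|) (#|T|) h2 hh => a b c h2 hh.
    clear -h2 hh em enu; clearbody nu m; lia.
  have [s [hs1 hs2 hs3 hs4]] := @greedy _ _ (adjg G) (2 * nu) 11 131
    (fun P Q hP hQ => gd P Q (leq_trans (eq_leq emu) hP) (leq_trans (eq_leq emu) hQ))
    N.+1 C T (fun x _ => outdeg G x)
    (fun y hy => ltac:(move: hy; rewrite !inE => /andP [hy _]; rewrite leqNgt; exact: hy))
    hC hT.
  have hsA : forall e, e \in s -> [/\ pi (xv e.1) < th, th <= pi (yv e.2) & adjg G e.1 e.2].
    move=> e /hs3 [he1 he2 he3]; split => //.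
      by move: he1; rewrite inE.
    by move: he2 => /setDP [+ _]; rewrite inE -leqNgt.
  have := @final_bound B pi th m (adjg G) xv yv s wf ord hc1 xinj yinj xyd hs2 hsA hs4.
  rewrite hs1 expnS => H; apply: leq_trans _ H; rewrite mul2n -addnn; exact: leq_addr.
pose r := fun y x => adjg G x y.
pose C := [set i | pi (yv i) < th] :\: high.
pose T := [set i | ~~ (pi (xv i) < th)].
have hT : 2 * nu + N.+1 * 131 <= #|T|.
  rewrite /T cnotin -/(cX th); move: (cX th) h2 => a h2; clear -h2 em enu; clearbody nu m; lia.
have hC : 2 * nu + N.+1 * 11 <= #|C|.
  have := cD [set i | pi (yv i) < th]; rewrite -/(cY th) -/C.
  move: (cY th) (#|high|) (#|C|) h1 hh => a b c h1 hh.
  clear -h1 hh em enu; clearbody nu m; lia.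
have gr : forall (P Q : {set 'I_m}), 2 * nu <= #|P| -> 2 * nu <= #|Q| ->
    exists x y, [/\ x \in P, y \in Q & r x y].
  move=> P Q hP hQ.
  have [x [y [hx hy hr]]] := gd Q P (leq_trans (eq_leq emu) hQ) (leq_trans (eq_leq emu) hP).
  by exists y, x.
have degC : forall x, x \in C -> #|[set y | r x y]| <= 131.
  by move=> x; rewrite !inE => /andP [hx _]; rewrite leqNgt.
have degT : forall y, y \in T -> #|[set x | r x y]| <= 11.
  by move=> y _; apply: outdeg.
have [s [hs1 hs2 hs3 hs4]] := @greedy _ _ r (2 * nu) 131 11 gr N.+1 C T degC degT hC hT.
have hsA : forall e, e \in s -> [/\ pi (yv e.1) < th, th <= pi (xv e.2) & r e.1 e.2].
  move=> e /hs3 [he1 he2 he3]; split => //.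
    by move: he1 => /setDP [+ _]; rewrite inE.
  by move: he2; rewrite inE -leqNgt.
have yxd : forall u w, yv u != xv w by move=> u w; rewrite eq_sym.
have := @final_bound B pi th m r yv xv s wf ord hc2 yinj xinj yxd hs2 hsA hs4.
rewrite hs1 expnS => H; apply: leq_trans _ H; rewrite mul2n -addnn; exact: leq_addr.
Qed.
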